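(* Let $G$ be a locally finite unweighted graph and $(x,y)\in E(G)$. Let $H$ be the subgraph of $G$ induced by $V_{(x,y)}=N_G(x)\cup N_G(y)\cup P_G(x,y)$. Then $\kappa_G(x,y)=\kappa_H(x,y)$. Moreover, if $H'$ denotes the graph obtained from $H$ by deleting all edges between $\Delta_G(x,y)$ and $P_G(x,y)$, then $\kappa_G(x,y)=\kappa_{H'}(x,y)$.
   Context: For a graph $K$ containing the edge $(x,y)$: $d_K$ is the shortest-path metric of $K$, $N_K(v)$ the neighbour set and $d_v$ the degree of $v$ in $K$, $m_v$ the uniform probability measure on $N_K(v)$, and $\kappa_K(x,y)=1-W_1^K(m_x,m_y)$, where $W_1^K(\mu,\nu)=\inf_{\pi}\sum_{u,w}\pi(u,w)d_K(u,w)$ is the transportation distance, the infimum being over couplings $\pi$ of $\mu$ and $\nu$. $\Delta_G(x,y)=N_G(x)\cap N_G(y)$, and $P_G(x,y)=\{v\in V(G): d_G(x,v)=d_G(y,v)=2\}$. *)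

(* Defs.v *)
From Stdlib Require Import Reals List Classical ClassicalEpsilon.
From Coquelicot Require Import Coquelicot.
Open Scope R_scope.

(* A graph K is a vertex type [V] with an adjacency relation [adj].
   "Simple/unweighted" and "locally finite" are stated as hypotheses. *)

Definition simple_graph {V : Type} (adj : V -> V -> Prop) : Prop :=
  (forall u v, adj u v -> adj v u) /\ (forall u, ~ adj u u).

Definition nbr_list {V : Type} (adj : V -> V -> Prop) (v : V) (l : list V) : Prop :=
  NoDup l /\ forall w, adj v w <-> In w l.

Definition locally_finite {V : Type} (adj : V -> V -> Prop) : Prop :=
  forall v, exists l, nbr_list adj v l.

(* a chosen enumeration of N_K(v) (meaningful when K is locally finite) *)
Definition nbrs {V : Type} (adj : V -> V -> Prop) (v : V) : list V :=
  epsilon (inhabits nil) (nbr_list adj v).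

Definition deg {V : Type} (adj : V -> V -> Prop) (v : V) : nat :=
  length (nbrs adj v).

Inductive walk {V : Type} (adj : V -> V -> Prop) : V -> V -> nat -> Prop :=
| walk0 : forall u, walk adj u u 0
| walkS : forall u v w n, adj u v -> walk adj v w n -> walk adj u w (S n).

Definition dist_is {V : Type} (adj : V -> V -> Prop) (u w : V) (n : nat) : Prop :=
  walk adj u w n /\ forall m, walk adj u w m -> (n <= m)%nat.

(* shortest-path metric d_K (only used where u, w are connected) *)
Definition dist {V : Type} (adj : V -> V -> Prop) (u w : V) : nat :=
  epsilon (inhabits 0%nat) (dist_is adj u w).

Definition sumR {A : Type} (l : list A) (f : A -> R) : R :=
  fold_right Rplus 0 (map f l).

(* pi is a coupling of m_x and m_y (uniform measures on N_K(x), N_K(y)) *)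
Definition coupling {V : Type} (adj : V -> V -> Prop) (x y : V) (pi : V -> V -> R) : Prop :=
  (forall u w, 0 <= pi u w) /\
  (forall u w, ~ (adj x u /\ adj y w) -> pi u w = 0) /\
  (forall u, adj x u -> sumR (nbrs adj y) (fun w => pi u w) = / INR (deg adj x)) /\
  (forall w, adj y w -> sumR (nbrs adj x) (fun u => pi u w) = / INR (deg adj y)).

Definition transport_cost {V : Type} (adj : V -> V -> Prop) (x y : V) (pi : V -> V -> R) : R :=
  sumR (nbrs adj x) (fun u => sumR (nbrs adj y) (fun w => pi u w * INR (dist adj u w))).

Definition W1 {V : Type} (adj : V -> V -> Prop) (x y : V) : R :=
  real (Glb_Rbar (fun c => exists pi, coupling adj x y pi /\ c = transport_cost adj x y pi)).

Definition kappa {V : Type} (adj : V -> V -> Prop) (x y : V) : R := 1 - W1 adj x y.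

Definition Delta {V : Type} (adj : V -> V -> Prop) (x y v : V) : Prop := adj x v /\ adj y v.
Definition Pset {V : Type} (adj : V -> V -> Prop) (x y v : V) : Prop :=
  dist_is adj x v 2 /\ dist_is adj y v 2.

Definition Vxy {V : Type} (adj : V -> V -> Prop) (x y v : V) : Prop :=
  adj x v \/ adj y v \/ Pset adj x y v.

Definition adjH {V : Type} (adj : V -> V -> Prop) (x y : V)
  (a b : {v : V | Vxy adj x y v}) : Prop := adj (proj1_sig a) (proj1_sig b).

Definition adjH' {V : Type} (adj : V -> V -> Prop) (x y : V)
  (a b : {v : V | Vxy adj x y v}) : Prop :=
  adjH adj x y a b /\
  ~ (Delta adj x y (proj1_sig a) /\ Pset adj x y (proj1_sig b)) /\
  ~ (Pset adj x y (proj1_sig a) /\ Delta adj x y (proj1_sig b)).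

(* Main.v *)
Require Import Defs.
From Stdlib Require Import Reals List Classical ClassicalEpsilon Permutation FinFun Lia Lra.
From Coquelicot Require Import Coquelicot.
Open Scope R_scope.

Lemma nbrs_spec {T} (A : T -> T -> Prop) v :
  (exists l, nbr_list A v l) -> nbr_list A v (nbrs A v).
Proof. intros H. unfold nbrs. apply epsilon_spec. exact H. Qed.

Lemma sig_inj {V} {P : V -> Prop} (a b : {v | P v}) :
  proj1_sig a = proj1_sig b -> a = b.
Proof. destruct a, b; simpl; intros ->; f_equal; apply proof_irrelevance. Qed.

Lemma lift_list {V} (P : V -> Prop) (l : list V) :
  (forall v, In v l -> P v) -> exists l' : list {v | P v}, map (@proj1_sig _ _) l' = l.
Proof.
  induction l as [|a l IH]; intros H.
  - exists nil; reflexivity.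
  - destruct IH as [l' Hl']. intros v Hv; apply H; right; exact Hv.
    exists (exist P a (H a (or_introl eq_refl)) :: l'). simpl; rewrite Hl'; reflexivity.
Qed.

Lemma sumR_map {A B} (f : A -> B) l g : sumR (map f l) g = sumR l (fun a => g (f a)).
Proof. unfold sumR. rewrite map_map. reflexivity. Qed.

Lemma sumR_perm {A} (l l' : list A) g : Permutation l l' -> sumR l g = sumR l' g.
Proof. induction 1; unfold sumR in *; simpl in *; try lra. Qed.

Lemma sumR_ext_in {A} (l : list A) g h :
  (forall a, In a l -> g a = h a) -> sumR l g = sumR l h.
Proof.
  induction l as [|a l IH]; intros H; unfold sumR in *; simpl; [reflexivity|].
  rewrite H by (left; reflexivity). rewrite IH; [reflexivity|].
  intros b Hb; apply H; right; exact Hb.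
Qed.

Lemma nbr_lift V (adj : V -> V -> Prop) (Hlf : locally_finite adj) (P : V -> Prop)
  x (hx : P x) (A : {v | P v} -> {v | P v} -> Prop)
  (HN : forall v, adj x v -> P v)
  (HA : forall b, A (exist P x hx) b <-> adj x (proj1_sig b)) :
  Permutation (map (@proj1_sig _ _) (nbrs A (exist P x hx))) (nbrs adj x)
  /\ nbr_list A (exist P x hx) (nbrs A (exist P x hx)).
Proof.
  destruct (nbrs_spec adj x (Hlf x)) as [Hnd Hin].
  assert (HA' : nbr_list A (exist P x hx) (nbrs A (exist P x hx))).
  { apply nbrs_spec.
    destruct (lift_list P (nbrs adj x)) as [l' Hl'].
    { intros v Hv. apply HN, Hin, Hv. }
    exists l'. split.
    - apply (NoDup_map_inv (@proj1_sig _ _)). rewrite Hl'. exact Hnd.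
    - intros b. rewrite HA, Hin, <- Hl'. split.
      + intros Hb. apply in_map_iff in Hb. destruct Hb as [b0 [E Hb0]].
        rewrite (sig_inj b b0) by (symmetry; exact E). exact Hb0.
      + intros Hb. apply in_map. exact Hb. }
  split; [|exact HA'].
  destruct HA' as [HnA HinA].
  apply NoDup_Permutation.
  - apply Injective_map_NoDup; [|exact HnA]. intros a b; apply sig_inj.
  - exact Hnd.
  - intros v. rewrite <- Hin. split.
    + intros Hv. apply in_map_iff in Hv. destruct Hv as [b [<- Hb]].
      apply HA, HinA, Hb.
    + intros Hv. apply in_map_iff. exists (exist P v (HN v Hv)). split; [reflexivity|].
      apply HinA, HA. exact Hv.
Qed.

Lemma transfer V (adj : V -> V -> Prop) (Hlf : locally_finite adj) x y
  (P : V -> Prop) (hx : P x) (hy : P y) (A : {v | P v} -> {v | P v} -> Prop)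
  (HNx : forall v, adj x v -> P v) (HNy : forall v, adj y v -> P v)
  (HAx : forall b, A (exist P x hx) b <-> adj x (proj1_sig b))
  (HAy : forall b, A (exist P y hy) b <-> adj y (proj1_sig b))
  (Hd : forall a b, adj x (proj1_sig a) -> adj y (proj1_sig b) ->
        Defs.dist A a b = Defs.dist adj (proj1_sig a) (proj1_sig b)) :
  W1 adj x y = W1 A (exist P x hx) (exist P y hy).
Proof.
  set (sx := exist P x hx). set (sy := exist P y hy).
  destruct (nbr_lift V adj Hlf P x hx A HNx HAx) as [Px [_ HinAx]].
  destruct (nbr_lift V adj Hlf P y hy A HNy HAy) as [Py [_ HinAy]].
  fold sx in Px, HinAx. fold sy in Py, HinAy.
  assert (Dx : deg A sx = deg adj x).
  { unfold deg. rewrite <- (Permutation_length Px). rewrite length_map. reflexivity. }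
  assert (Dy : deg A sy = deg adj y).
  { unfold deg. rewrite <- (Permutation_length Py). rewrite length_map. reflexivity. }
  assert (S2 : forall F : V -> V -> R,
    sumR (nbrs A sx) (fun a => sumR (nbrs A sy) (fun b => F (proj1_sig a) (proj1_sig b)))
    = sumR (nbrs adj x) (fun u => sumR (nbrs adj y) (fun w => F u w))).
  { intros F.
    rewrite <- (sumR_perm _ _ _ Px). rewrite sumR_map.
    apply sumR_ext_in. intros a _.
    rewrite <- (sumR_perm _ _ _ Py). rewrite sumR_map. reflexivity. }
  assert (Sy : forall g : V -> R, sumR (nbrs A sy) (fun b => g (proj1_sig b)) = sumR (nbrs adj y) g).
  { intros g. rewrite <- (sumR_perm _ _ _ Py). rewrite sumR_map. reflexivity. }
  assert (Sx : forall g : V -> R, sumR (nbrs A sx) (fun b => g (proj1_sig b)) = sumR (nbrs adj x) g).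
  { intros g. rewrite <- (sumR_perm _ _ _ Px). rewrite sumR_map. reflexivity. }
  unfold W1. f_equal. apply Glb_Rbar_eqset. intros c. split.
  - intros [pi [Hc ->]]. destruct Hc as (H0 & Hz & Hr & Hcol).
    exists (fun a b => pi (proj1_sig a) (proj1_sig b)). split.
    + split; [|split; [|split]].
      * intros; apply H0.
      * intros a b Hn. apply Hz. intros [h1 h2]. apply Hn. split.
        -- apply HAx; exact h1.
        -- apply HAy; exact h2.
      * intros a Ha. rewrite (Sy (fun w => pi (proj1_sig a) w)). rewrite Dx.
        apply Hr. apply HAx; exact Ha.
      * intros b Hb. rewrite (Sx (fun u => pi u (proj1_sig b))). rewrite Dy.
        apply Hcol. apply HAy; exact Hb.
    + unfold transport_cost. fold sx sy.
      rewrite <- (S2 (fun u w => pi u w * INR (Defs.dist adj u w))).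
      apply sumR_ext_in. intros a Ha. apply sumR_ext_in. intros b Hb.
      rewrite Hd; [reflexivity| |].
      * apply HAx, HinAx, Ha.
      * apply HAy, HinAy, Hb.
  - intros [pi' [Hc ->]]. destruct Hc as (H0 & Hz & Hr & Hcol).
    set (pi := fun v w =>
      match excluded_middle_informative (P v) with
      | left pv => match excluded_middle_informative (P w) with
                   | left pw => pi' (exist P v pv) (exist P w pw)
                   | right _ => 0 end
      | right _ => 0 end).
    assert (piE : forall a b, pi (proj1_sig a) (proj1_sig b) = pi' a b).
    { intros [v pv] [w pw]. unfold pi; simpl.
      destruct (excluded_middle_informative (P v)) as [pv'|n]; [|contradiction].
      destruct (excluded_middle_informative (P w)) as [pw'|n]; [|contradiction].
      rewrite (proof_irrelevance _ pv' pv), (proof_irrelevance _ pw' pw). reflexivity. }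
    exists pi. split.
    + split; [|split; [|split]].
      * intros u w. unfold pi.
        destruct (excluded_middle_informative (P u)); [|lra].
        destruct (excluded_middle_informative (P w)); [|lra]. apply H0.
      * intros u w Hn. unfold pi.
        destruct (excluded_middle_informative (P u)) as [pu|]; [|reflexivity].
        destruct (excluded_middle_informative (P w)) as [pw|]; [|reflexivity].
        apply Hz. intros [h1 h2]. apply Hn. split.
        -- apply HAx in h1. exact h1.
        -- apply HAy in h2. exact h2.
      * intros u Hu. set (a := exist P u (HNx u Hu)).
        rewrite <- Sy. rewrite <- Dx.
        change u with (proj1_sig a).
        rewrite <- (Hr a) by (apply HAx; exact Hu).
        apply sumR_ext_in. intros b _. apply piE.
      * intros w Hw. set (b := exist P w (HNy w Hw)).
        rewrite <- Sx. rewrite <- Dy.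
        change w with (proj1_sig b).
        rewrite <- (Hcol b) by (apply HAy; exact Hw).
        apply sumR_ext_in. intros a _. apply piE.
    + unfold transport_cost. fold sx sy.
      rewrite <- (S2 (fun u w => pi u w * INR (Defs.dist adj u w))).
      apply sumR_ext_in. intros a Ha. apply sumR_ext_in. intros b Hb.
      rewrite piE. rewrite Hd; [reflexivity| |].
      * apply HAx, HinAx, Ha.
      * apply HAy, HinAy, Hb.
Qed.

Lemma walk_inv0 {T} (A : T -> T -> Prop) u w : walk A u w 0 -> u = w.
Proof. intros H; inversion H; reflexivity. Qed.

Lemma walk_inv1 {T} (A : T -> T -> Prop) u w : walk A u w 1 -> A u w.
Proof. intros H; inversion H; subst. apply walk_inv0 in H4; subst; assumption. Qed.

Lemma walk_inv2 {T} (A : T -> T -> Prop) u w : walk A u w 2 -> exists v, A u v /\ A v w.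
Proof. intros H; inversion H; subst. exists v. split; [assumption|]. apply walk_inv1; assumption. Qed.

Lemma dist_unique {T} (A : T -> T -> Prop) u w n : dist_is A u w n -> Defs.dist A u w = n.
Proof.
  intros Hn. assert (He : dist_is A u w (Defs.dist A u w)).
  { unfold Defs.dist. apply epsilon_spec. exists n; exact Hn. }
  destruct Hn as [W1' M1], He as [W2 M2].
  specialize (M1 _ W2). specialize (M2 _ W1'). lia.
Qed.

Lemma dist_classify {T} (A : T -> T -> Prop) u w : walk A u w 3 ->
  (u = w /\ Defs.dist A u w = 0%nat) \/
  (u <> w /\ A u w /\ Defs.dist A u w = 1%nat) \/
  (u <> w /\ ~ A u w /\ (exists v, A u v /\ A v w) /\ Defs.dist A u w = 2%nat) \/
  (u <> w /\ ~ A u w /\ ~ (exists v, A u v /\ A v w) /\ Defs.dist A u w = 3%nat).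
Proof.
  intros W3.
  destruct (classic (u = w)) as [E|NE].
  { left. split; [exact E|]. apply dist_unique. subst. split; [constructor|]. intros; lia. }
  right. destruct (classic (A u w)) as [HA|NA].
  { left. split; [exact NE|]. split; [exact HA|]. apply dist_unique. split.
    - econstructor; [exact HA|constructor].
    - intros [|m] Hm; [apply walk_inv0 in Hm; contradiction|lia]. }
  right. destruct (classic (exists v, A u v /\ A v w)) as [Hv|Nv].
  { left. do 3 (split; [assumption|]). apply dist_unique. split.
    - destruct Hv as [v [h1 h2]]. econstructor; [exact h1|]. econstructor; [exact h2|constructor].
    - intros [|[|m]] Hm; [apply walk_inv0 in Hm; contradiction|apply walk_inv1 in Hm; contradiction|lia]. }
  right. do 3 (split; [assumption|]). apply dist_unique. split; [exact W3|].
  intros [|[|[|m]]] Hm; [apply walk_inv0 in Hm; contradiction|apply walk_inv1 in Hm; contradiction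
    |apply walk_inv2 in Hm; contradiction|lia].
Qed.

Lemma dist_transfer {V} (adj : V -> V -> Prop) (P : V -> Prop) (A : {v | P v} -> {v | P v} -> Prop)
  (a b : {v | P v}) :
  walk A a b 3 -> walk adj (proj1_sig a) (proj1_sig b) 3 ->
  (A a b <-> adj (proj1_sig a) (proj1_sig b)) ->
  ((exists c, A a c /\ A c b) <-> (exists v, adj (proj1_sig a) v /\ adj v (proj1_sig b))) ->
  Defs.dist A a b = Defs.dist adj (proj1_sig a) (proj1_sig b).
Proof.
  intros W W' E1 E2.
  assert (E0 : a = b <-> proj1_sig a = proj1_sig b).
  { split; [intros ->; reflexivity|apply sig_inj]. }
  destruct (dist_classify A a b W) as [(h1&h2)|[(h1&h2&h3)|[(h1&h2&h3&h4)|(h1&h2&h3&h4)]]];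
  destruct (dist_classify adj _ _ W') as [(g1&g2)|[(g1&g2&g3)|[(g1&g2&g3&g4)|(g1&g2&g3&g4)]]];
  try congruence; tauto.
Qed.

Lemma W1_eq V (adj : V -> V -> Prop) (Hs : simple_graph adj) (Hlf : locally_finite adj)
  x y (Hxy : adj x y) (hx : Vxy adj x y x) (hy : Vxy adj x y y)
  (A : {v | Vxy adj x y v} -> {v | Vxy adj x y v} -> Prop)
  (p1 : forall a b, A a b -> adj (proj1_sig a) (proj1_sig b))
  (p2x : forall u, adj x (proj1_sig u) -> A (exist _ x hx) u /\ A u (exist _ x hx))
  (p2y : forall u, adj y (proj1_sig u) -> A (exist _ y hy) u /\ A u (exist _ y hy))
  (p3 : forall u w, adj x (proj1_sig u) -> adj y (proj1_sig w) ->
        adj (proj1_sig u) (proj1_sig w) -> A u w)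
  (p4 : forall u w v, adj x (proj1_sig u) -> adj y (proj1_sig w) ->
        adj (proj1_sig u) v -> adj v (proj1_sig w) -> exists c, A u c /\ A c w) :
  W1 adj x y = W1 A (exist _ x hx) (exist _ y hy).
Proof.
  destruct Hs as [Hsym Hirr].
  apply transfer; auto.
  - intros v Hv; left; exact Hv.
  - intros v Hv; right; left; exact Hv.
  - intros b; split; [apply p1|intros h; apply p2x, h].
  - intros b; split; [apply p1|intros h; apply p2y, h].
  - intros a b Ha Hb. apply dist_transfer.
    + econstructor; [apply (p2x a Ha)|].
      econstructor; [apply (p2x (exist _ y hy) Hxy)|].
      econstructor; [apply (p2y b Hb)|constructor].
    + econstructor; [apply Hsym, Ha|]. econstructor; [exact Hxy|].
      econstructor; [exact Hb|constructor].
    + split; [apply p1|apply p3; assumption].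
    + split.
      * intros [c [h1 h2]]. exists (proj1_sig c). split; apply p1; assumption.
      * intros [v [h1 h2]]. eapply p4; eassumption.
Qed.

Lemma notP_of_adj V (adj : V -> V -> Prop) x y z v : adj z v -> ~ Pset adj x y v \/ True.
Proof. auto. Qed.

Lemma nbr_notP V (adj : V -> V -> Prop) x y v :
  (adj x v \/ adj y v) -> ~ Pset adj x y v.
Proof.
  intros [H|H] [[_ M1] [_ M2]].
  - assert (2 <= 1)%nat by (apply M1; econstructor; [exact H|constructor]). lia.
  - assert (2 <= 1)%nat by (apply M2; econstructor; [exact H|constructor]). lia.
Qed.

Lemma mid_Vxy V (adj : V -> V -> Prop) (Hs : simple_graph adj) x y (Hxy : adj x y) u w v :
  adj x u -> adj y w -> adj u v -> adj v w -> Vxy adj x y v.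
Proof.
  destruct Hs as [Hsym Hirr]. intros hu hw h1 h2.
  destruct (classic (adj x v)) as [a|na]; [left; exact a|].
  destruct (classic (adj y v)) as [b|nb]; [right; left; exact b|].
  right; right. split; split.
  - econstructor; [exact hu|]. econstructor; [exact h1|constructor].
  - intros [|[|m]] Hm; [apply walk_inv0 in Hm; rewrite <- Hm in nb; exfalso; apply nb, Hsym, Hxy
      |apply walk_inv1 in Hm; contradiction|lia].
  - econstructor; [exact hw|]. econstructor; [apply Hsym, h2|constructor].
  - intros [|[|m]] Hm; [apply walk_inv0 in Hm; rewrite <- Hm in na; exfalso; apply na, Hxy
      |apply walk_inv1 in Hm; contradiction|lia].
Qed.

Theorem lemma2p3 (V : Type) (adj : V -> V -> Prop)
  (Hsimple : simple_graph adj) (Hlf : locally_finite adj)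
  (x y : V) (Hxy : adj x y)
  (hx : Vxy adj x y x) (hy : Vxy adj x y y) :
  kappa adj x y = kappa (adjH adj x y) (exist _ x hx) (exist _ y hy) /\
  kappa adj x y = kappa (adjH' adj x y) (exist _ x hx) (exist _ y hy).
Proof.
  pose proof Hsimple as [Hsym Hirr].
  assert (Px : ~ Pset adj x y x) by (apply nbr_notP; right; apply Hsym, Hxy).
  assert (Py : ~ Pset adj x y y) by (apply nbr_notP; left; exact Hxy).
  assert (Dx : ~ Defs.Delta adj x y x) by (intros [h _]; exact (Hirr _ h)).
  assert (Dy : ~ Defs.Delta adj x y y) by (intros [_ h]; exact (Hirr _ h)).
  unfold kappa. split; f_equal.
  - apply W1_eq; auto; unfold adjH; simpl.
    + intros u hu; split; [exact hu|apply Hsym, hu].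
    + intros u hu; split; [exact hu|apply Hsym, hu].
    + intros u w v hu hw h1 h2.
      exists (exist _ v (mid_Vxy V adj Hsimple x y Hxy _ _ v hu hw h1 h2)). simpl; auto.
  - apply W1_eq; auto; unfold adjH', adjH; simpl.
    + intros a b [h _]; exact h.
    + intros u hu. repeat split; try tauto. apply Hsym, hu.
    + intros u hu. repeat split; try tauto. apply Hsym, hu.
    + intros u w hu hw h. pose proof (nbr_notP V adj x y _ (or_introl hu)).
      pose proof (nbr_notP V adj x y _ (or_intror hw)). tauto.
    + intros u w v hu hw h1 h2.
      pose proof (nbr_notP V adj x y _ (or_introl hu)) as nu.
      pose proof (nbr_notP V adj x y _ (or_intror hw)) as nw.
      destruct (classic (Defs.Delta adj x y (proj1_sig u))) as [du|ndu].
      { exists (exist _ y hy). simpl. destruct du as [du1 du2].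
        repeat split; try tauto. apply Hsym, du2. }
      destruct (classic (Defs.Delta adj x y (proj1_sig w))) as [dw|ndw].
      { exists (exist _ x hx). simpl. destruct dw as [dw1 dw2].
        repeat split; try tauto. apply Hsym, hu. }
      exists (exist _ v (mid_Vxy V adj Hsimple x y Hxy _ _ v hu hw h1 h2)). simpl.
      repeat split; tauto.
Qed.
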